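(* Let $\mathcal{P},\mathcal{Q}\in\mathbb{R}[\xi]^{\ell\times n}$ be two real matrix polynomials of the same size. Then there exist unimodular matrix polynomials $\mathcal{U}\in\mathbb{R}[\xi]^{\ell\times\ell}$ and $\mathcal{V}\in\mathbb{R}[\xi]^{n\times n}$, nonnegative integers $r_P,m,q,r_1,\dots,r_q,s_1,\dots,s_q$ with $r_P+m+r_1+\dots+r_q=n$ and $r_P+r_1+\dots+r_q+s_1+\dots+s_q=\ell$, such that the following holds. Partition the columns of $\mathcal{U}\mathcal{P}\mathcal{V}$ and $\mathcal{U}\mathcal{Q}\mathcal{V}$ into consecutive groups $C_P, C_0, C_1,\dots,C_q$ of sizes $r_P,m,r_1,\dots,r_q$, and partition their rows into consecutive groups $R_P,R_1,\dots,R_q,S_1,\dots,S_q$ of sizes $r_P,r_1,\dots,r_q,s_1,\dots,s_q$. Denote by $X[R,C]$ the block of a matrix $X$ in row group $R$ and column group $C$. Then: (a) $(\mathcal{U}\mathcal{P}\mathcal{V})[R_P,C_P]=\Sigma_P$, $(\mathcal{U}\mathcal{P}\mathcal{V})[R_P,C_0]=0$; for every $a$, the blocks of $\mathcal{U}\mathcal{P}\mathcal{V}$ in rows $R_a$ and in rows $S_a$ vanish in the columns $C_P$, $C_0$ and $C_b$ for all $b\le a$ (the blocks in columns $C_b$, $b>a$, and all blocks of row group $R_P$ in columns $C_1,\dots,C_q$ are arbitrary); (b) $(\mathcal{U}\mathcal{Q}\mathcal{V})[R_P,C_P]=\mathcal{Q}_{11}$, $(\mathcal{U}\mathcal{Q}\mathcal{V})[R_P,C_0]=\mathcal{Q}_{12}$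 (arbitrary); for every $a$, the blocks of $\mathcal{U}\mathcal{Q}\mathcal{V}$ in rows $R_a$ vanish in the columns $C_P,C_0$ and $C_b$ for $b<a$, and $(\mathcal{U}\mathcal{Q}\mathcal{V})[R_a,C_a]=\Sigma_a$; the blocks in rows $S_a$ vanish in the columns $C_P,C_0$ and $C_b$ for all $b\le a$ (all remaining blocks are arbitrary). Here $\Sigma_P$ is an $r_P\times r_P$ diagonal matrix polynomial and each $\Sigma_a$ is an $r_a\times r_a$ diagonal matrix polynomial $\mathrm{diag}(p_{a,1},\dots,p_{a,r_a})$, all diagonal entries being monic polynomials.
   Context: A square matrix polynomial $\mathcal{M}\in\mathbb{R}[\xi]^{k\times k}$ is called unimodular if $\det \mathcal{M}$ is a nonzero constant. A scalar polynomial is monic if its leading coefficient is $1$. Block groups of size zero are allowed. *)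

(* Defs.v *)
From HB Require Import structures.
From mathcomp Require Import all_boot all_order all_algebra.
From mathcomp Require Import reals.
Set Implicit Arguments. Unset Strict Implicit. Unset Printing Implicit Defensive.
Import Order.TTheory GRing.Theory Num.Theory.
Local Open Scope ring_scope.

Definition unimodular (R : comNzRingType) (k : nat) (M : 'M[{poly R}]_k) : Prop :=
  exists c : R, c != 0 /\ \det M = c%:P.

(* Consecutive groups of sizes given by s (possibly of size 0):
   blk s k = index (0-based) of the group containing position k,
   boff s k = offset of k inside that group. *)
Fixpoint blk (s : seq nat) (k : nat) : nat :=
  match s with
  | [::] => 0
  | x :: s' => if (k < x)%N then 0%N else (blk s' (k - x)).+1
  end.

Fixpoint boff (s : seq nat) (k : nat) : nat :=
  match s with
  | [::] => k
  | x :: s' => if (k < x)%N then k else boff s' (k - x)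
  end.

(* Row groups R_P, R_a, S_a (with a 0-based, plus the offset inside the group). *)
Inductive rgroup := RowP of nat | RowR of nat & nat | RowS of nat & nat.
Inductive cgroup := ColP of nat | Col0 | ColC of nat & nat.

Definition row_group (rP : nat) (rs ss : seq nat) (i : nat) : rgroup :=
  if (i < rP)%N then RowP i
  else if (i - rP < sumn rs)%N then RowR (blk rs (i - rP)) (boff rs (i - rP))
  else RowS (blk ss (i - rP - sumn rs)) (boff ss (i - rP - sumn rs)).

Definition col_group (rP m : nat) (rs : seq nat) (j : nat) : cgroup :=
  if (j < rP)%N then ColP j
  else if (j < rP + m)%N then Col0
  else ColC (blk rs (j - rP - m)) (boff rs (j - rP - m)).

Definition diag_monic_entry (R : nzRingType) (p : {poly R}) (o1 o2 : nat) : bool :=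
  if o1 == o2 then p \is monic else p == 0.

Definition P_form (R : nzRingType) (l n : nat) (rP m : nat) (rs ss : seq nat)
  (A : 'M[{poly R}]_(l, n)) : Prop :=
  forall (i : 'I_l) (j : 'I_n),
  match row_group rP rs ss i, col_group rP m rs j with
  | RowP o1, ColP o2 => is_true (diag_monic_entry (A i j) o1 o2)
  | RowP _, Col0 => A i j = 0
  | RowP _, ColC _ _ => True
  | RowR _ _, ColP _ | RowR _ _, Col0 => A i j = 0
  | RowR a _, ColC b _ => (b <= a)%N -> A i j = 0
  | RowS _ _, ColP _ | RowS _ _, Col0 => A i j = 0
  | RowS a _, ColC b _ => (b <= a)%N -> A i j = 0
  end.

Definition Q_form (R : nzRingType) (l n : nat) (rP m : nat) (rs ss : seq nat)
  (B : 'M[{poly R}]_(l, n)) : Prop :=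
  forall (i : 'I_l) (j : 'I_n),
  match row_group rP rs ss i, col_group rP m rs j with
  | RowP _, _ => True
  | RowR _ _, ColP _ | RowR _ _, Col0 => B i j = 0
  | RowR a o1, ColC b o2 =>
      if (b < a)%N then B i j = 0
      else if b == a then is_true (diag_monic_entry (B i j) o1 o2) else True
  | RowS _ _, ColP _ | RowS _ _, Col0 => B i j = 0
  | RowS a _, ColC b _ => (b <= a)%N -> B i j = 0
  end.

(* Main.v *)
Require Import Defs.
From HB Require Import structures.
From mathcomp Require Import all_boot all_order all_algebra all_fingroup zify.
From mathcomp Require Import reals.
Import Order.TTheory GRing.Theory Num.Theory.
Local Open Scope ring_scope.

Module Aux.
Set Implicit Arguments. Unset Strict Implicit.
Section Smith.
Variable F : fieldType.
Local Notation Pl := {poly F}.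

Lemma mul_delta_entry p q (M : 'M[Pl]_(p,q)) (j0 j : 'I_q) i j' :
  (M *m delta_mx j0 j) i j' = M i j0 * (j' == j)%:R.
Proof.
rewrite !mxE (bigD1 j0) //= big1 => [|k /negPf nk]; rewrite !mxE ?eqxx ?nk //=.
by rewrite addr0.
by rewrite mulr0.
Qed.

Lemma col_op p q (M : 'M[Pl]_(p,q)) (j0 j : 'I_q) (c : Pl) : j0 != j ->
  exists2 E : 'M[Pl]_q, E \in unitmx &
    forall i j', (M *m E) i j' = M i j' + c * (M i j0 * (j' == j)%:R).
Proof.
move=> nj; exists (1%:M + c *: delta_mx j0 j).
  have [] := @mulmx1_unit _ _ (1%:M + c *: delta_mx j0 j) (1%:M - c *: delta_mx j0 j) => //.
  rewrite mulmxDl !mulmxBr !mul1mx mulmx1 -!scalemxAl -!scalemxAr.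
  rewrite mul_delta_mx_0 1?eq_sym // (_ : c *: (c *: (0 : 'M[Pl]_q)) = 0) ?subr0 ?subrK //.
  by apply/matrixP => x y; rewrite !mxE !mulr0.
by move=> i j'; rewrite mulmxDr mulmx1 -scalemxAr mxE [in X in _ + X]mxE mul_delta_entry.
Qed.

Lemma row_op p q (M : 'M[Pl]_(p,q)) (i0 i1 : 'I_p) (c : Pl) : i0 != i1 ->
  exists2 E : 'M[Pl]_p, E \in unitmx &
    forall i j, (E *m M) i j = M i j + c * (M i0 j * (i == i1)%:R).
Proof.
move=> ni; have [E uE hE] := @col_op _ _ (M^T) _ _ c ni.
exists E^T; first by rewrite unitmx_tr.
move=> i j; rewrite -[M]trmxK -trmx_mul mxE hE !mxE.
done.
Qed.

Definition pgood m n (M : 'M[Pl]_(1 + m, 1 + n)) :=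
  exists L R, [/\ L \in unitmx, R \in unitmx, (L *m M *m R) 0 0 != 0,
     forall j, (L *m M *m R) 0 0 %| (L *m M *m R) 0 j
   & forall i, (L *m M *m R) 0 0 %| (L *m M *m R) i 0].

Lemma pgood_red m n (M : 'M[Pl]_(1 + m, 1 + n)) L0 R0 :
  L0 \in unitmx -> R0 \in unitmx -> pgood (L0 *m M *m R0) -> pgood M.
Proof.
move=> u0 v0 [L [R [uL uR h1 h2 h3]]]; exists (L *m L0), (R0 *m R).
have -> : L *m L0 *m M *m (R0 *m R) = L *m (L0 *m M *m R0) *m R by rewrite !mulmxA.
by rewrite !unitmx_mul u0 v0 uL uR; split.
Qed.

Lemma pivot m n (M : 'M[Pl]_(1 + m, 1 + n)) : M != 0 -> pgood M.
Proof.
move=> nzM.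
case: (pickP (fun ij : 'I_(1+m) * 'I_(1+n) => M ij.1 ij.2 != 0)) => [[i j] /= nz | h];
  last first.
  by case/eqP: nzM; apply/matrixP => i j; rewrite mxE; apply/eqP/negbFE/(h (i,j)).
have [N leN] := ubnP (size (M i j)); elim: N => // N IHN in M i j nz leN {nzM} *.
apply: (pgood_red (L0 := tperm_mx 0 i) (R0 := tperm_mx 0 j)); rewrite ?unitmx_perm //.
have Ea : (tperm_mx 0 i *m M *m tperm_mx 0 j) 0 0 = M i j.
  by rewrite -xrowE -xcolE !mxE !tpermL.
move: (tperm_mx 0 i *m M *m tperm_mx 0 j) Ea => M' Ea.
set a := M' 0 0.
have nza : a != 0 by rewrite /a Ea.
case: (pickP (fun j => ~~ (a %| M' 0 j))) => [j' ndv | hall].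
  have nj : (0 : 'I_(1+n)) != j'.
    by apply: contraNneq ndv => <-; rewrite dvdpp.
  have [E uE hE] := col_op M' (- (M' 0 j' %/ a)) nj.
  apply: (pgood_red (L0 := 1%:M) (R0 := E)); rewrite ?unitmx1 // mul1mx.
  have E0 : (M' *m E) 0 j' = M' 0 j' %% a.
    by rewrite hE eqxx mulr1 -/a mulNr {1}(divp_eq (M' 0 j') a) addrAC subrr add0r.
  apply: (IHN (M' *m E) 0 j').
    by rewrite E0; apply: contra ndv => /eqP/modp_eq0P.
  rewrite E0 (leq_trans (_ : _ < size a)%N) ?ltn_modp //.
  by rewrite /a Ea -ltnS.
case: (pickP (fun i => ~~ (a %| M' i 0))) => [i' ndv | hall2].
  have ni : (0 : 'I_(1+m)) != i'.
    by apply: contraNneq ndv => <-; rewrite dvdpp.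
  have [E uE hE] := row_op M' (- (M' i' 0 %/ a)) ni.
  apply: (pgood_red (L0 := E) (R0 := 1%:M)); rewrite ?unitmx1 // mulmx1.
  have E0 : (E *m M') i' 0 = M' i' 0 %% a.
    by rewrite hE eqxx mulr1 -/a mulNr {1}(divp_eq (M' i' 0) a) addrAC subrr add0r.
  apply: (IHN (E *m M') i' 0).
    by rewrite E0; apply: contra ndv => /eqP/modp_eq0P.
  rewrite E0 (leq_trans (_ : _ < size a)%N) ?ltn_modp //.
  by rewrite /a Ea -ltnS.
exists 1%:M, 1%:M; rewrite mul1mx mulmx1 !unitmx1; split => //.
  by move=> j1; have := hall j1; move/negbFE.
by move=> i1; have := hall2 i1; move/negbFE.
Qed.


Definition dgood m n (M : 'M[Pl]_(m,n)) :=
  exists L R k (d : nat -> Pl), [/\ L \in unitmx, R \in unitmx, (k <= m)%N /\ (k <= n)%N,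
    forall i, (i < k)%N -> d i \is monic &
    forall i j, (L *m M *m R) i j = if ((i < k)%N && (i == j :> nat)) then d i else 0].

Lemma dgood_red m n (M : 'M[Pl]_(m, n)) L0 R0 :
  L0 \in unitmx -> R0 \in unitmx -> dgood (L0 *m M *m R0) -> dgood M.
Proof.
move=> u0 v0 [L [R [k [d [uL uR hk md hd]]]]]; exists (L *m L0), (R0 *m R), k, d.
have -> : L *m L0 *m M *m (R0 *m R) = L *m (L0 *m M *m R0) *m R by rewrite !mulmxA.
by rewrite !unitmx_mul u0 v0 uL uR; split.
Qed.

Lemma diagonalize m n (M : 'M[Pl]_(m,n)) : dgood M.
Proof.
elim: m n M => [|m IH] n M.
  exists 1%:M, 1%:M, 0%N, (fun _ => 0); rewrite !unitmx1; split => //.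
  by case.
case: n M => [|n] M.
  exists 1%:M, 1%:M, 0%N, (fun _ => 0); rewrite !unitmx1; split => //.
  by move=> i [].
have [-> | nzM] := eqVneq M 0.
  exists 1%:M, 1%:M, 0%N, (fun _ => 0); rewrite !unitmx1; split => //.
  by move=> i j; rewrite mulmx0 mul0mx mxE.
have [L1 [R1 [uL1 uR1 nz dvr dvc]]] := @pivot m n M nzM.
apply: (dgood_red uL1 uR1).
move: (L1 *m M *m R1) nz dvr dvc => M1 nz dvr dvc.
set a := M1 0 0 in nz dvr dvc.
pose u := ursubmx (M1 : 'M_(1 + m, 1 + n)).
pose v := dlsubmx (M1 : 'M_(1 + m, 1 + n)).
pose W := drsubmx (M1 : 'M_(1 + m, 1 + n)).
pose u' := map_mx (fun x => x %/ a) u; pose v' := map_mx (fun x => x %/ a) v.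
have Eu : a *: u' = u.
  apply/matrixP => i j; rewrite !mxE mulrC divpK // (ord1 i) lshift0; exact: dvr.
have Ev : a *: v' = v.
  apply/matrixP => i j; rewrite !mxE mulrC divpK // (ord1 j) lshift0; exact: dvc.
have eM1 : M1 = block_mx a%:M u v W.
  rewrite -[M1]submxK [ulsubmx M1]mx11_scalar; congr block_mx.
  by congr (_ %:M); rewrite !mxE !lshift0.
pose Lt : 'M_(1 + m) := block_mx 1%:M 0 (- v') 1%:M.
pose Rt : 'M_(1 + n) := block_mx 1%:M (- u') 0 1%:M.
have uLt : Lt \in unitmx.
  by rewrite unitmxE det_lblock !det_scalar !expr1n mulr1 unitr1.
have uRt : Rt \in unitmx.
  by rewrite unitmxE det_ublock !det_scalar !expr1n mulr1 unitr1.
apply: (dgood_red uLt uRt).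
have -> : Lt *m M1 *m Rt = block_mx a%:M 0 0 (W - v' *m u).
  rewrite eM1 /Lt /Rt !mulmx_block !(mul1mx, mulmx1, mul0mx, mulmx0, addr0, add0r).
  rewrite !mulmxN !mulNmx mul_scalar_mx mul_mx_scalar Eu Ev !addNr mul0mx oppr0 add0r.
  by rewrite addrC.
have [L' [R' [k' [d' [uL' uR' [hk hk'] md' hd']]]]] := IH n (W - v' *m u).
pose c := (lead_coef a)^-1.
have nzc : c != 0 by rewrite invr_eq0 lead_coef_eq0.
exists (block_mx (c%:P)%:M 0 0 L'), (block_mx 1%:M 0 0 R'), k'.+1,
  (fun i => if i is i'.+1 then d' i' else c%:P * a).
split.
- rewrite unitmxE det_ublock det_scalar1 unitrM -unitmxE uL' andbT.
  by rewrite poly_unitE size_polyC nzc coefC unitfE.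
- by rewrite unitmxE det_ublock det_scalar1 mul1r -unitmxE.
- by split; rewrite ltnS.
- case=> [_|i]; last by rewrite ltnS; apply: md'.
  by rewrite monicE mul_polyC lead_coefZ mulVf // lead_coef_eq0.
rewrite !mulmx_block !(mulmx0, mul0mx, addr0, add0r, mulmx1) -scalar_mxM.
move: (L' *m _ *m R') hd' => D hd'.
move=> i j; rewrite !mxE.
case: (splitP i) => i1 Hi; rewrite !mxE; case: (splitP j) => j1 Hj; rewrite ?mxE.
- by rewrite Hi Hj (ord1 i1) (ord1 j1) /= mulr1n.
- by rewrite Hi Hj (ord1 i1).
- by rewrite Hi Hj (ord1 j1) /= add1n andbF.
- by rewrite hd' Hi Hj !add1n ltnS eqSS.
Qed.

End Smith.


Section CombS.
Local Open Scope nat_scope.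
End CombS.
Open Scope nat_scope.
Lemma blk_cat s1 s2 x : blk (s1 ++ s2) x =
  if (x < sumn s1)%N then blk s1 x else (size s1 + blk s2 (x - sumn s1))%N.
Proof.
elim: s1 x => [|y s1 IH] x /=; first by rewrite subn0.
case: ifP => h1; first by rewrite ifT //; lia.
rewrite IH; case: ifP => h2; first by rewrite ifT //; lia.
by rewrite ifF; [rewrite subnDA | lia].
Qed.

Lemma boff_cat s1 s2 x : boff (s1 ++ s2) x =
  if (x < sumn s1)%N then boff s1 x else boff s2 (x - sumn s1).
Proof.
elim: s1 x => [|y s1 IH] x /=; first by rewrite subn0.
case: ifP => h1; first by rewrite ifT //; lia.
rewrite IH; case: ifP => h2; first by rewrite ifT //; lia.
by rewrite ifF; [rewrite subnDA | lia].
Qed.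

Lemma blk_lt s x : (x < sumn s)%N -> (blk s x < size s)%N.
Proof.
elim: s x => [|y s IH] x //=.
case: ifP => // h1 h2; rewrite ltnS; apply: IH; lia.
Qed.

Ltac splitifs := repeat match goal with |- context[if ?c then _ else _] =>
  let H := fresh "H" in destruct c eqn:H end.

Definition tf (a b k x : nat) : nat :=
  if (x < a)%N then x else if (x < a + k)%N then (a + b + (x - a))%N
  else if (x < a + k + b)%N then (x - k)%N else x.

Definition sf (n' k x : nat) : nat := if (x < n')%N then (k + x)%N else (x - n')%N.

Lemma tf_lt a b k k' x : (x < a + b + k + k')%N -> (tf a b k x < a + b + k + k')%N.
Proof. rewrite /tf; repeat case: ifP; lia. Qed.

Lemma tf_inj a b k k' x y : (x < a + b + k + k')%N -> (y < a + b + k + k')%N ->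
  tf a b k x = tf a b k y -> x = y.
Proof. rewrite /tf; repeat case: ifP; lia. Qed.

Lemma sf_lt n' k x : (x < k + n')%N -> (sf n' k x < k + n')%N.
Proof. rewrite /sf; repeat case: ifP; lia. Qed.

Lemma sf_inj n' k x y : (x < k + n')%N -> (y < k + n')%N -> sf n' k x = sf n' k y -> x = y.
Proof. rewrite /sf; repeat case: ifP; lia. Qed.


Lemma RGtop (rP : nat) (rs ss : seq nat) (k k' x : nat) : (x < rP + sumn rs + sumn ss + k + k')%N -> (tf (rP + sumn rs) (sumn ss) k x < rP + sumn rs + sumn ss)%N ->
  row_group rP (rs ++ [:: k]) (ss ++ [:: k']) x = row_group rP rs ss (tf (rP + sumn rs) (sumn ss) k x).
Proof.
move=> h1; rewrite /tf /row_group !sumn_cat /= addn0 !blk_cat !boff_cat.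
splitifs; move=> //= h2; try lia.
all: rewrite (_ : (x - k - rP - sumn rs = x - rP - (sumn rs + k))%N) //; lia.
Qed.

Lemma RGbot (rP : nat) (rs ss : seq nat) (k k' x t2 : nat) : (x < rP + sumn rs + sumn ss + k + k')%N -> tf (rP + sumn rs) (sumn ss) k x = (rP + sumn rs + sumn ss + t2)%N ->
  ((t2 < k)%N /\ row_group rP (rs ++ [:: k]) (ss ++ [:: k']) x = RowR (size rs) t2) \/
  ((k <= t2)%N /\ exists o, row_group rP (rs ++ [:: k]) (ss ++ [:: k']) x = RowS (size ss) o).
Proof.
move=> h1; rewrite /tf /row_group !sumn_cat /= addn0 !blk_cat !boff_cat /=.
splitifs; move=> //= h2; try lia.
all: rewrite ?addn0; first [left; split; [lia| f_equal; lia] | right; split; [lia| eexists; reflexivity] | lia].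
Qed.

Lemma CGr (rP m : nat) (rs : seq nat) (k x j1 : nat) : (x < k + (rP + m + sumn rs))%N -> sf (rP + m + sumn rs) k x = (k + j1)%N ->
  (j1 < rP + m + sumn rs)%N ->
  col_group rP m (rs ++ [:: k]) x = col_group rP m rs j1.
Proof.
move=> h1; rewrite /sf; case: ifP => h2 h3 h4; last by lia.
have -> : x = j1 by lia.
rewrite /col_group !blk_cat !boff_cat.
splitifs; try lia; by [].
Qed.

Lemma CGl (rP m : nat) (rs : seq nat) (k x j1 : nat) : (x < k + (rP + m + sumn rs))%N -> sf (rP + m + sumn rs) k x = j1 ->
  (j1 < k)%N -> col_group rP m (rs ++ [:: k]) x = ColC (size rs) j1.
Proof.
move=> h1; rewrite /sf; case: ifP => h2 h3 h4; first by lia.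
rewrite /col_group !blk_cat !boff_cat /=.
splitifs; try lia; f_equal; lia.
Qed.

Lemma RB_R (rP : nat) (rs ss : seq nat) x a' o : row_group rP rs ss x = RowR a' o -> (a' < size rs)%N.
Proof.
rewrite /row_group; splitifs => // [[<- _]]; exact: blk_lt.
Qed.

Lemma RB_S (rP : nat) (rs ss : seq nat) x a' o : (x < rP + sumn rs + sumn ss)%N ->
  row_group rP rs ss x = RowS a' o -> (a' < size ss)%N.
Proof.
move=> h; rewrite /row_group; splitifs => // [[<- _]]; apply: blk_lt; lia.
Qed.

Lemma CB (rP m : nat) (rs : seq nat) x b' o : (x < rP + m + sumn rs)%N ->
  col_group rP m rs x = ColC b' o -> (b' < size rs)%N.
Proof.
move=> h; rewrite /col_group; splitifs => // [[<- _]]; apply: blk_lt; lia.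
Qed.


Open Scope ring_scope.
Section Main.
Variable F : fieldType.
Local Notation Pl := {poly F}.

Definition Gd l n (P Q : 'M[Pl]_(l, n)) :=
  exists U V rP m rs ss, [/\ U \in unitmx, V \in unitmx, size ss = size rs,
    (rP + m + sumn rs)%N = n /\ (rP + sumn rs + sumn ss)%N = l &
    P_form rP m rs ss (U *m P *m V) /\ Q_form rP m rs ss (U *m Q *m V)].

Lemma Gd_red l n (P Q : 'M[Pl]_(l, n)) L0 R0 :
  L0 \in unitmx -> R0 \in unitmx -> Gd (L0 *m P *m R0) (L0 *m Q *m R0) -> Gd P Q.
Proof.
move=> u0 v0 [U [V [rP [m [rs [ss [uU uV h1 h2 h3]]]]]]].
exists (U *m L0), (R0 *m V), rP, m, rs, ss.
have E : forall M : 'M[Pl]_(l, n), U *m L0 *m M *m (R0 *m V) = U *m (L0 *m M *m R0) *m V.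
  by move=> M; rewrite !mulmxA.
by rewrite !E !unitmx_mul u0 v0 uU uV; split.
Qed.

Lemma Gd_castr l1 l2 n (e : l1 = l2) (P Q : 'M[Pl]_(l1, n)) :
  Gd P Q -> Gd (castmx (e, erefl n) P) (castmx (e, erefl n) Q).
Proof. by case: l2 / e; rewrite !castmx_id. Qed.

Lemma Gd_castc l n1 n2 (e : n1 = n2) (P Q : 'M[Pl]_(l, n1)) :
  Gd P Q -> Gd (castmx (erefl l, e) P) (castmx (erefl l, e) Q).
Proof. by case: n2 / e; rewrite !castmx_id. Qed.

Lemma assemble r l' k n' (A B : 'M[Pl]_(r + l', k + n')) (D : 'M[Pl]_(l', k))
  (d2 : nat -> Pl) :
  (k <= l')%N -> (forall i, (i < k)%N -> d2 i \is monic) ->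
  dlsubmx A = 0 -> drsubmx A = 0 -> dlsubmx B = D -> drsubmx B = 0 ->
  (forall (i : 'I_l') (j : 'I_k), D i j = if (j == i :> nat) then d2 i else 0) ->
  Gd (ursubmx A) (ursubmx B) -> Gd A B.
Proof.
move=> hk md hA1 hA2 hB1 hB2 hD [U' [V' [rP [m [rs [ss [uU uV hsz [hn hl] [hP hQ]]]]]]]].
subst n' r.
pose a := (rP + sumn rs)%N; pose b := sumn ss.
have hr : (rP + sumn rs + sumn ss + l' = a + b + k + (l' - k))%N by rewrite /a /b; lia.
have tlt : forall x : 'I_(rP + sumn rs + sumn ss + l'), (tf a b k x < rP + sumn rs + sumn ss + l')%N.
  move=> x; have := ltn_ord x; rewrite [in X in (_ < X)%N -> _]hr => h.
  by rewrite [in X in (_ < X)%N]hr; apply: tf_lt.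
pose to := fun x : 'I_(rP + sumn rs + sumn ss + l') => Ordinal (tlt x).
have toinj : injective to.
  move=> x y /(congr1 val) /= /(@tf_inj a b k (l' - k)) h; apply: val_inj; apply: h.
    by have := ltn_ord x; rewrite [in X in (_ < X)%N -> _]hr.
  by have := ltn_ord y; rewrite [in X in (_ < X)%N -> _]hr.
pose tp := perm toinj.
have slt : forall x : 'I_(k + (rP + m + sumn rs)), (sf (rP + m + sumn rs) k x < k + (rP + m + sumn rs))%N by move=> x; apply: sf_lt.
pose so := fun x : 'I_(k + (rP + m + sumn rs)) => Ordinal (slt x).
have soinj : injective so.
  move=> x y /(congr1 val) /= /(@sf_inj (rP + m + sumn rs) k) h; apply: val_inj; exact: h.
pose sp := perm soinj.
exists (perm_mx tp *m block_mx U' 0 0 1%:M), (block_mx 1%:M 0 0 V' *m perm_mx (sp^-1)%g),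
  rP, m, (rs ++ [:: k]), (ss ++ [:: (l' - k)%N]).
have EX : forall M : 'M[Pl]_(rP + sumn rs + sumn ss + l', k + (rP + m + sumn rs)),
   perm_mx tp *m block_mx U' 0 0 1%:M *m M *m (block_mx 1%:M 0 0 V' *m perm_mx (sp^-1)%g)
   = col_perm sp (row_perm tp (block_mx (U' *m ulsubmx M) (U' *m ursubmx M *m V')
        (dlsubmx M) (drsubmx M *m V'))).
  move=> M; rewrite col_permE row_permE !mulmxA; congr (_ *m _).
  rewrite -!mulmxA; congr (_ *m _).
  rewrite -{1}[M]submxK !mulmx_block.
  by rewrite !(mul1mx, mulmx1, mul0mx, mulmx0, addr0, add0r).
split.
- by rewrite unitmx_mul unitmx_perm unitmxE det_ublock det1 mulr1 -unitmxE.
- by rewrite unitmx_mul unitmx_perm andbT unitmxE det_ublock det1 mul1r -unitmxE.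
- by rewrite !size_cat hsz.
- by rewrite !sumn_cat /=; split; lia.
rewrite !EX hA1 hA2 hB1 hB2 !mul0mx.
move: (U' *m ulsubmx A) (U' *m ursubmx A *m V') hP => XA1 XA2 hP.
move: (U' *m ulsubmx B) (U' *m ursubmx B *m V') hQ => XB1 XB2 hQ.
split => i j; rewrite !mxE !permE.
- have Hi := ltn_ord i; have Hj := ltn_ord j.
  have Hi' : (i < a + b + k + (l' - k))%N by rewrite -hr.
  case: (splitP (to i)) => t /= Ht; rewrite !mxE;
    case: (splitP (so j)) => j1 /= Hj1; rewrite ?mxE.
  + rewrite RGtop // ?Ht // (CGl (j1 := j1)) //.
    case E: (row_group rP rs ss t) => [o|a' o|a' o] //.
      by have := RB_R E; lia.
    by have := @RB_S rP rs ss t _ _ (ltn_ord t) E; lia.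
  + by rewrite RGtop // ?Ht // (CGr (j1 := j1)) //; exact: hP.
  + have [[_ ->]|[_ [o ->]]] := RGbot (t2 := t) Hi' Ht; by case: col_group.
  + have [[_ ->]|[_ [o ->]]] := RGbot (t2 := t) Hi' Ht; by case: col_group.
- have Hi := ltn_ord i; have Hj := ltn_ord j.
  have Hi' : (i < a + b + k + (l' - k))%N by rewrite -hr.
  case: (splitP (to i)) => t /= Ht; rewrite !mxE;
    case: (splitP (so j)) => j1 /= Hj1; rewrite ?mxE.
  + rewrite RGtop // ?Ht // (CGl (j1 := j1)) //.
    case E: (row_group rP rs ss t) => [o|a' o|a' o] //.
      have h := RB_R E.
      case: ifP => h1; first lia.
      case: ifP => h2 //; lia.
    by have := @RB_S rP rs ss t _ _ (ltn_ord t) E; lia.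
  + by rewrite RGtop // ?Ht // (CGr (j1 := j1)) //; exact: hQ.
  + rewrite hD.
    have [[ht ->]|[ht [o ->]]] := RGbot (t2 := t) Hi' Ht.
      rewrite (CGl (j1 := j1)) // ltnn eqxx /diag_monic_entry.
      have [e|ne] := eqVneq (nat_of_ord j1) (nat_of_ord t).
        by apply: md.
      by [].
    rewrite (_ : (j1 == t :> nat) = false); last by apply/eqP; have := ltn_ord j1; lia.
    by case: col_group.
  + have [[ht ->]|[ht [o ->]]] := RGbot (t2 := t) Hi' Ht; last by case: col_group.
    rewrite (CGr (j1 := j1)) //.
    case E: (col_group rP m rs j1) => [o|//|b' o] //.
    by rewrite (CB (ltn_ord j1) E).
Qed.


Lemma bl_mul r l' n (L2 : 'M[Pl]_l') (R2 : 'M[Pl]_n) (M : 'M[Pl]_(r + l', n)) :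
  block_mx 1%:M 0 0 L2 *m M *m R2 = col_mx (usubmx M *m R2) (L2 *m dsubmx M *m R2).
Proof.
by rewrite -{1}[M]vsubmxK mul_block_col !mul1mx !mul0mx addr0 add0r mul_col_mx.
Qed.

Lemma main_lemma l n (P Q : 'M[Pl]_(l, n)) : Gd P Q.
Proof.
have [N leN] := ubnP (l + n); elim: N => // N IH in l n P Q leN *.
have [L0 [R0 [r [d [uL0 uR0 [hrl hrn] md hd]]]]] := diagonalize P.
apply: (Gd_red uL0 uR0).
move: (L0 *m P *m R0) (L0 *m Q *m R0) hd => A B hA.
have [erl | ltrl] := eqVneq r l.
  subst r.
  exists 1%:M, 1%:M, l, (n - l)%N, [::], [::]; rewrite !mul1mx !mulmx1 !unitmx1.
  split => //.
    by rewrite /= !addn0 subnKC.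
  split => i j; rewrite /row_group (ltn_ord i) // /col_group.
  case: ifP => hj.
    rewrite hA (ltn_ord i) /= /diag_monic_entry.
    by case: eqP => // _; apply: md.
  rewrite ifT; last by rewrite subnKC.
  rewrite hA (_ : (i == j :> nat) = false) ?andbF //.
  by apply/eqP; have := ltn_ord i; lia.
have ltrl' : (r < l)%N by rewrite ltn_neqAle ltrl hrl.
have e : (r + (l - r) = l)%N by rewrite subnKC.
rewrite -[A](castmxK (esym e) (erefl n)) -[B](castmxK (esym e) (erefl n)).
apply: (Gd_castr (esym (esym e))).
have hA1 : forall i j, castmx (esym e, erefl n) A i j =
   if ((i < r)%N && (i == j :> nat)) then d i else 0.
  by move=> i j; rewrite castmxE hA.
move: (castmx (esym e, erefl n) A) (castmx (esym e, erefl n) B) hA1 => A1 B1 hA1.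
have dA1 : dsubmx A1 = 0.
  apply/matrixP => i j; rewrite !mxE hA1 /=.
  by rewrite ifF // ltnNge leq_addr.
have [L2 [R2 [k [d2 [uL2 uR2 [hkl hkn] md2 hd2]]]]] := diagonalize (dsubmx B1).
have uBL : block_mx (1%:M : 'M[Pl]_r) 0 0 L2 \in unitmx.
  by rewrite unitmxE det_ublock det1 mul1r -unitmxE.
apply: (Gd_red uBL uR2).
rewrite !bl_mul dA1 mulmx0 mul0mx.
move: (L2 *m dsubmx B1 *m R2) hd2 => D2 hd2.
have ek : (k + (n - k) = n)%N by rewrite subnKC.
set A2 := col_mx _ 0; set B2 := col_mx _ D2.
rewrite -[A2](castmxK (erefl (r + (l - r))%N) (esym ek)).
rewrite -[B2](castmxK (erefl (r + (l - r))%N) (esym ek)).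
apply: (Gd_castc (esym (esym ek))).
apply: (@assemble _ _ _ _ _ _ (dlsubmx (castmx (erefl (r + (l - r))%N, esym ek) B2)) d2 hkl md2).
- apply/matrixP => i j; rewrite !mxE castmxE cast_ord_id col_mxEd.
  by rewrite mxE.
- apply/matrixP => i j; rewrite !mxE castmxE cast_ord_id col_mxEd.
  by rewrite mxE.
- by [].
- apply/matrixP => i j; rewrite !mxE castmxE cast_ord_id col_mxEd hd2 /=.
  rewrite ifF //; apply/negbTE/negP => /andP [h1 /eqP h2]; lia.
- move=> i j; rewrite !mxE castmxE cast_ord_id col_mxEd hd2 /=.
  have [eij | nij] := eqVneq (nat_of_ord i) (nat_of_ord j).
    by rewrite eij ltn_ord.
  by rewrite andbF.
apply: IH; lia.
Qed.

End Main.

End Aux.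
Import Aux.

Lemma unit_unimod (F : fieldType) k (M : 'M[{poly F}]_k) : M \in unitmx -> unimodular M.
Proof.
rewrite unitmxE poly_unitE => /andP [/size_poly1P [c nz E] _].
by exists c; split.
Qed.

Theorem theorem1 (R : realType) (l n : nat) (P Q : 'M[{poly R}]_(l, n)) :
  exists (U : 'M[{poly R}]_l) (V : 'M[{poly R}]_n) (rP m : nat) (rs ss : seq nat),
    unimodular U /\ unimodular V /\ size ss = size rs /\
    (rP + m + sumn rs)%N = n /\ (rP + sumn rs + sumn ss)%N = l /\
    P_form rP m rs ss (U *m P *m V) /\ Q_form rP m rs ss (U *m Q *m V).
Proof.
have [U [V [rP [m [rs [ss [uU uV h1 [h2 h3] [h4 h5]]]]]]]] := main_lemma P Q.
exists U, V, rP, m, rs, ss.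
by split; [exact: unit_unimod | split; [exact: unit_unimod | split]].
Qed.
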